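(* Let $T$ be a tree with $m$ edges satisfying $\sum_{e_{uv}\in E(T)}(d_u+d_v)=4m$, and let $s$ be a positive integer. Then the $s$-th subdivision tree $T_s$ is neutral.
   Context: All graphs are finite, simple and connected; $d_u$ denotes the degree of $u$ and sums over edges $e_{uv}$ count each edge once. The $s$-th subdivision graph $G_s$ of a graph $G$ is obtained by inserting $s$ new vertices into each edge of $G$ (i.e., replacing each edge by a path with $s$ internal vertices). For a graph $G=(V,E)$ with $m=|E|\geq1$, the assortativity coefficient is $$r(G)=\frac{m^{-1}\sum_{e_{uv}\in E} d_{u}d_{v}-\Big[m^{-1}\sum_{e_{uv}\in E} \tfrac{1}{2}(d_{u}+d_{v})\Big]^{2}}{m^{-1}\sum_{e_{uv}\in E} \tfrac{1}{2}(d^{2}_{u}+d^{2}_{v})-\Big[m^{-1}\sum_{e_{uv}\in E} \tfrac{1}{2}(d_{u}+d_{v})\Big]^{2}},$$ defined whenever the denominator is nonzero; $G$ is neutral if $r(G)$ is defined and equals $0$. *)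

(* Defs.v *)
From HB Require Import structures.
From mathcomp Require Import all_boot all_order all_algebra.
Set Implicit Arguments. Unset Strict Implicit. Unset Printing Implicit Defensive.
Import Order.TTheory GRing.Theory Num.Theory.
Local Open Scope ring_scope.

Section Graphs.
Variable V : finType.
Variable adj : rel V.

Definition simple_graph : Prop := symmetric adj /\ irreflexive adj.

Definition connected_graph : Prop := forall u v : V, connect adj u v.

Definition acyclic_graph : Prop :=
  forall c : seq V, uniq c -> (3 <= size c)%N -> ~~ cycle adj c.

Definition is_tree : Prop := simple_graph /\ connected_graph /\ acyclic_graph.

Definition deg (u : V) : nat := #|[set v | adj u v]|.

(* sum of f u v over the edges e_uv, each edge counted once: half of the
   sum over ordered adjacent pairs (f is always symmetric below) *)
Definition edge_sum (f : V -> V -> rat) : rat :=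
  (\sum_(u : V) \sum_(v : V | adj u v) f u v) / 2.

Definition nedges : rat := edge_sum (fun _ _ => 1).

Definition dR (u : V) : rat := (deg u)%:R.

Definition assort_mean : rat :=
  nedges^-1 * edge_sum (fun u v => (dR u + dR v) / 2).

Definition assort_num : rat :=
  nedges^-1 * edge_sum (fun u v => dR u * dR v) - assort_mean ^+ 2.

Definition assort_den : rat :=
  nedges^-1 * edge_sum (fun u v => (dR u ^+ 2 + dR v ^+ 2) / 2) - assort_mean ^+ 2.

(* assortativity coefficient r(G) (meaningful when the denominator is nonzero) *)
Definition assortativity : rat := assort_num / assort_den.

Definition neutral : Prop :=
  (0 < nedges) /\ assort_den != 0 /\ assortativity = 0.

(* edges of G, oriented by enum_rank: (u,v) with adj u v and rank u < rank v *)
Definition oedgeb (x : V * V) : bool :=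
  adj x.1 x.2 && (enum_rank x.1 < enum_rank x.2)%N.

Definition oedge := {x : V * V | oedgeb x}.

(* vertices of G_s: original vertices, plus s new vertices (e, i), i < s,
   on each edge e *)
Definition subdiv_vertex (s : nat) : finType := (V + (oedge * 'I_s))%type.

(* the edge e = (u,v) becomes the path u - (e,0) - (e,1) - ... - (e,s-1) - v *)
Definition subdiv_adj (s : nat) : rel (subdiv_vertex s) :=
  fun x y =>
    match x, y with
    | inl u, inl v => (s == 0%N) && adj u v
    | inl u, inr (e, i) =>
        (((i : nat) == 0%N) && ((val e).1 == u)) ||
        (((i : nat) == s.-1) && ((val e).2 == u))
    | inr (e, i), inl u =>
        (((i : nat) == 0%N) && ((val e).1 == u)) ||
        (((i : nat) == s.-1) && ((val e).2 == u))
    | inr (e, i), inr (f, j) =>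
        (e == f) && ((i.+1 == j :> nat) || (j.+1 == i :> nat))
    end.

End Graphs.

Arguments subdiv_vertex {V} adj s.
Arguments subdiv_adj {V} adj s.
Arguments oedge {V} adj.

(* Main.v *)
Require Import Defs.
From mathcomp Require Import all_boot all_order all_algebra zify.
Set Implicit Arguments. Unset Strict Implicit. Unset Printing Implicit Defensive.
Import Order.TTheory GRing.Theory Num.Theory.
From mathcomp Require Import ring lra.
Local Open Scope ring_scope.

Lemma cyc_case (V : finType) (adj : rel V) x y p z :
  simple_graph adj -> acyclic_graph adj ->
  uniq (x :: y :: p) -> path adj x (y :: p) -> z \in y :: p -> z != y -> adj x z -> False.
Proof.
move=> [sym irr] acyc Hu Hp Hzin Hzy Hxz.
set k := index z (y :: p).
have Hk : (k < size (y :: p))%N by rewrite index_mem.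
have Hk0 : (0 < k)%N by rewrite /k /= eq_sym (negbTE Hzy).
have U : uniq (x :: take k.+1 (y :: p)).
  move: (Hu); rewrite [uniq (x :: _)]/= => /andP [Hx Hu'].
  rewrite cons_uniq take_uniq // andbT.
  by apply: contra Hx; apply: mem_take.
have S : (3 <= size (x :: take k.+1 (y :: p)))%N.
  rewrite /= size_take; move: Hk => /= Hk; clearbody k; case: (ltnP k (size p)) => /= H; lia.
move/negP: (acyc _ U S); apply.
have Hw : nth y (y :: p) k = z by rewrite nth_index.
rewrite (take_nth y) // [cycle _ _]/= rcons_path -[X in adj (last _ X) _]/(rcons (take k (y :: p)) (nth y (y :: p) k)).
by rewrite last_rcons -(take_nth y) // take_path // Hw sym Hxz.
Qed.

Lemma leaf_aux (V : finType) (adj : rel V) :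
  simple_graph adj -> acyclic_graph adj ->
  forall n x p, (#|V| - size (x :: p) <= n)%N -> uniq (x :: p) -> path adj x p ->
  p != [::] -> exists u, (deg adj u != 2)%N && (0 < deg adj u)%N.
Proof.
move=> SG acyc; have [sym irr] := SG.
elim=> [|n IH] x p Hn Hu Hp Hne.
all: case: p Hn Hu Hp Hne => [//|y p] Hn Hu Hp _.
all: have Hxy : adj x y by case/andP: Hp.
all: have Hpos : (0 < deg adj x)%N by apply/card_gt0P; exists y; rewrite inE.
all: case: (boolP (deg adj x == 2)) => Hd2; last by exists x; rewrite Hd2.
all: have [z Hz] : exists z, [set v | adj x v] :\ y = [set z].
all: try (apply/cards1P; move: Hd2; rewrite /deg (cardsD1 y) inE Hxy; lia).
all: have : z \in [set v | adj x v] :\ y by rewrite Hz set11.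
all: rewrite !inE => /andP [Hzy Hxz].
all: case: (boolP (z \in x :: y :: p)) => Hzin.
1,3: (have Hzx : z != x by apply/eqP => E; move: Hxz; rewrite E irr);
  move: Hzin; rewrite in_cons (negbTE Hzx) /= => Hzin;
  by case: (cyc_case SG acyc Hu Hp Hzin Hzy Hxz).
all: have U2 : uniq (z :: x :: y :: p) by rewrite /= Hzin.
all: have S2 : (size (z :: x :: y :: p) <= #|V|)%N by rewrite -(card_uniqP U2) max_card.
  move: Hn S2 => /=; lia.
apply: (IH z (x :: y :: p)) => //=.
  move: Hn S2 => /=; lia.
by rewrite sym Hxz.
Qed.

Lemma inl_eq (A B : eqType) (a b : A) : (inl a == inl b :> A + B) = (a == b).
Proof. by apply/eqP/eqP => [[]|->]. Qed.
Lemma inr_eq (A B : eqType) (a b : B) : (inr a == inr b :> A + B) = (a == b).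
Proof. by apply/eqP/eqP => [[]|->]. Qed.
Lemma inl_inr_eq (A B : eqType) (a : A) (b : B) : (inl a == inr b :> A + B) = false.
Proof. by apply/eqP. Qed.
Lemma inr_inl_eq (A B : eqType) (a : A) (b : B) : (inr b == inl a :> A + B) = false.
Proof. by apply/eqP. Qed.
Definition sumE := (inl_eq, inr_eq, inl_inr_eq, inr_inl_eq).

Section S.
Variables (V : finType) (adj : rel V) (s' : nat).
Hypothesis SG : simple_graph adj.

Lemma oedge_neq (e : oedge adj) : (val e).1 != (val e).2.
Proof.
case: e => [[a b] /= /andP [H _]]; apply/eqP => E; move: H; rewrite E.
by case: SG => _ ->.
Qed.

Lemma deg_inr (e : oedge adj) (i : 'I_s'.+1) :
  deg (subdiv_adj adj s'.+1) (inr (e, i)) = 2%N.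
Proof.
pose l : subdiv_vertex adj s'.+1 :=
  if (i == 0 :> nat) then inl (val e).1 else inr (e, inord i.-1).
pose r : subdiv_vertex adj s'.+1 :=
  if (i == s' :> nat) then inl (val e).2 else inr (e, inord i.+1).
have Hi := ltn_ord i; have He := oedge_neq e.
rewrite /deg; have -> : [set y | subdiv_adj adj s'.+1 (inr (e, i)) y] = [set l; r].
  apply/setP => y; rewrite !inE /l /r.
  case: y => [u | [f j]] /=.
    case: (i =P 0%N :> nat) => H0; case: (i =P s' :> nat) => H1 /=;
      by rewrite !sumE ?(eq_sym u).
  have Hj := ltn_ord j.
  case: (i =P 0%N :> nat) => H0; case: (i =P s' :> nat) => H1 /=;
   rewrite !sumE /= ?xpair_eqE -?val_eqE /= ?inordK ?(eq_sym (sval f)) ?orbF; try lia;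
   case: (sval e == sval f) => //=; lia.
rewrite cards2 /l /r.
case: (i =P 0%N :> nat) => H0; case: (i =P s' :> nat) => H1 //=.
- by rewrite sumE He.
- rewrite sumE xpair_eqE eqxx /= -val_eqE /= !inordK; lia.
Qed.

Definition gmap (u v : V) : subdiv_vertex adj s'.+1 :=
  match (insub (u, v) : option (oedge adj)) with
  | Some e => inr (e, ord0)
  | None => match (insub (v, u) : option (oedge adj)) with
            | Some e => inr (e, ord_max)
            | None => inl u
            end
  end.

Lemma rank_neq u v : adj u v -> (enum_rank u != enum_rank v :> nat).
Proof.
move=> H; apply/eqP => E; have : enum_rank u = enum_rank v by apply: val_inj.
move/enum_rank_inj => E'; move: H; rewrite E'; by case: SG => _ ->.
Qed.

Lemma gmap_spec u v : adj u v -> exists e : oedge adj,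
  (val e = (u, v) /\ gmap u v = inr (e, ord0)) \/
  (val e = (v, u) /\ gmap u v = inr (e, ord_max)).
Proof.
move=> H; rewrite /gmap; case: insubP => [e _ Ee|Hn]; first by exists e; left.
case: insubP => [e _ Ee|Hn2]; first by exists e; right.
exfalso; have Hr := rank_neq H; have H' : adj v u by case: SG => sym _; rewrite sym.
move: Hn Hn2; rewrite /oedgeb /= H H' /= => /negbTE A /negbTE B.
by move: Hr; rewrite neq_ltn A B.
Qed.

Lemma oedge_rank (e : oedge adj) : (enum_rank (val e).1 < enum_rank (val e).2)%N.
Proof. by case: e => [[a b] /= /andP [_ H]]. Qed.
Lemma oedge_adj (e : oedge adj) : adj (val e).1 (val e).2.
Proof. by case: e => [[a b] /= /andP [H _]]. Qed.
Lemma oedge_val (e : oedge adj) : val e = ((val e).1, (val e).2).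
Proof. by case: (val e). Qed.

Lemma deg_inl (u : V) : deg (subdiv_adj adj s'.+1) (inl u) = deg adj u.
Proof.
have [sym irr] := SG.
rewrite /deg; have -> : [set y | subdiv_adj adj s'.+1 (inl u) y] =
   [set gmap u v | v in [set v | adj u v]].
  apply/setP => y; rewrite inE; apply/idP/imsetP.
  - case: y => [w | [e i]] //= /orP [/andP [Hi /eqP He1] | /andP [Hi /eqP He2]].
    + exists (val e).2; first by rewrite inE -He1 oedge_adj.
      have Hr := oedge_rank e.
      have Ha : adj u (val e).2 by rewrite -He1; apply: oedge_adj.
      have [e' [[Ev ->]|[Ev ->]]] := gmap_spec Ha.
      * have -> : e' = e by apply: val_inj; rewrite Ev oedge_val He1.
        by congr inr; congr pair; apply: val_inj; rewrite /= (eqP Hi).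
      * exfalso; have := oedge_rank e'; rewrite Ev /= -He1.
        by move/(ltn_trans Hr); rewrite ltnn.
    + exists (val e).1; first by rewrite inE -He2 sym oedge_adj.
      have Hr := oedge_rank e.
      have Ha : adj u (val e).1 by rewrite -He2 sym; apply: oedge_adj.
      have [e' [[Ev ->]|[Ev ->]]] := gmap_spec Ha.
      * exfalso; have := oedge_rank e'; rewrite Ev /= -He2.
        by move/(ltn_trans Hr); rewrite ltnn.
      * have -> : e' = e by apply: val_inj; rewrite Ev oedge_val He2.
        by congr inr; congr pair; apply: val_inj; rewrite /= (eqP Hi).
  - move=> [v]; rewrite inE => Huv ->.
    have [e [[Ev ->]|[Ev ->]]] := gmap_spec Huv; rewrite /= Ev /= !eqxx ?orbT //.
apply: card_in_imset => v w; rewrite !inE => Hv Hw.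
have [e [[Ev ->]|[Ev ->]]] := gmap_spec Hv; have [f [[Ew ->]|[Ew ->]]] := gmap_spec Hw;
  move=> /(congr1 (fun x => if x is inr p then val p.1 else val e)) /=;
  rewrite Ev Ew; case=> *; subst => //.
Qed.
End S.

Lemma sub_sym (V : finType) (adj : rel V) s :
  symmetric adj -> symmetric (subdiv_adj adj s).
Proof.
move=> sym [u|[e i]] [v|[f j]] //=; first by rewrite sym.
by rewrite eq_sym orbC.
Qed.

Lemma edge_sum_sym (W : finType) (a : rel W) (f : W -> W -> rat) (F : W -> rat) :
  symmetric a -> (forall x y, a x y -> f x y = F x + F y) ->
  edge_sum a f = \sum_x dR a x * F x.
Proof.
move=> sym Hf; rewrite /edge_sum.
have -> : \sum_x \sum_(y | a x y) f x y =
          \sum_x \sum_(y | a x y) F x + \sum_x \sum_(y | a x y) F y.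
  rewrite -big_split /=; apply: eq_bigr => x _; rewrite -big_split /=.
  by apply: eq_bigr => y Hy; rewrite Hf.
have E1 : \sum_x \sum_(y | a x y) F x = \sum_x dR a x * F x.
  apply: eq_bigr => x _.
  rewrite (eq_bigl (fun y => y \in [set y | a x y])); last by move=> y; rewrite inE.
  by rewrite sumr_const /dR /deg mulr_natl.
have E2 : \sum_x \sum_(y | a x y) F y = \sum_x dR a x * F x.
  rewrite (exchange_big_dep xpredT) //= -E1; apply: eq_bigr => y _.
  by apply: eq_bigl => x; rewrite sym.
rewrite E1 E2; field; done.
Qed.

Theorem theorem1 (V : finType) (adj : rel V) (s : nat) :
  is_tree adj ->
  0 < nedges adj ->
  edge_sum adj (fun u v => dR adj u + dR adj v) = 4 * nedges adj ->
  (0 < s)%N ->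
  neutral (subdiv_adj adj s).
Proof.
move=> [SG [_ AC]] Hm Hsum; case: s => [//|s'] _.
have [sym irr] := SG.
set a := subdiv_adj adj s'.+1.
have syma : symmetric a by apply: sub_sym.
set D1 := \sum_u dR adj u.
set D2 := \sum_u dR adj u * dR adj u.
set D3 := \sum_u dR adj u * (dR adj u) ^+ 2.
set Q := \sum_(p : oedge adj * 'I_s'.+1) (1 : rat).
have HQ : 0 <= Q by apply: sumr_ge0.
have dRl : forall u, dR a (inl u) = dR adj u by move=> u; rewrite /dR deg_inl.
have dRr : forall p, dR a (inr p) = 2 by case=> e i; rewrite /dR deg_inr.
have sumW : forall G : rat -> rat, \sum_x dR a x * G (dR a x) =
    \sum_u dR adj u * G (dR adj u) + Q * (2 * G 2).
  move=> G; rewrite big_sumType /=; congr (_ + _).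
    by apply: eq_bigr => u _; rewrite dRl.
  by rewrite mulr_suml; apply: eq_bigr => p _; rewrite dRr mul1r.
have NE : nedges adj = D1 / 2.
  rewrite /nedges (edge_sum_sym (F := fun _ => 1 / 2)) //; try (by move=> * /=; field; done).
  by rewrite /D1 mulr_suml; apply: eq_bigr => u _; rewrite mul1r.
have HD2 : D2 = 2 * D1.
  move: Hsum; rewrite NE (edge_sum_sym (F := dR adj)) // /D2 => ->; field; done.
have NEa : nedges a = D1 / 2 + Q.
  rewrite /nedges (edge_sum_sym (F := fun x => (fun _ => 1 / 2) (dR a x))) //; try (by move=> * /=; field; done).
  rewrite (sumW (fun _ => 1 / 2)).
  have -> : \sum_u dR adj u * (1 / 2) = D1 / 2 by rewrite /D1 mulr_suml.
  field; done.
have MS : edge_sum a (fun u v => (dR a u + dR a v) / 2) = D2 / 2 + 2 * Q.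
  rewrite (edge_sum_sym (F := fun x => (fun t => t / 2) (dR a x))) //; try (by move=> * /=; field; done).
  rewrite (sumW (fun t => t / 2)).
  have -> : \sum_u dR adj u * (dR adj u / 2) = D2 / 2.
    by rewrite /D2 mulr_suml; apply: eq_bigr => u _; rewrite mulrA.
  field; done.
have PS : edge_sum a (fun u v => dR a u * dR a v) = 2 * D2 - 2 * D1 + 4 * Q.
  rewrite (edge_sum_sym (F := fun x => (fun t => 2 * t - 2) (dR a x))) //; last first.
    move=> [u|p] [v|q] //= _; rewrite ?dRl ?dRr; ring.
  rewrite (sumW (fun t => 2 * t - 2)).
  have -> : \sum_u dR adj u * (2 * dR adj u - 2) = 2 * D2 - 2 * D1.
    rewrite /D2 /D1 !mulr_sumr -sumrB; apply: eq_bigr => u _; ring.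
  ring.
have SS : edge_sum a (fun u v => (dR a u ^+ 2 + dR a v ^+ 2) / 2) = D3 / 2 + 4 * Q.
  rewrite (edge_sum_sym (F := fun x => (fun t => t ^+ 2 / 2) (dR a x))) //; try (by move=> * /=; field; done).
  rewrite (sumW (fun t => t ^+ 2 / 2)).
  have -> : \sum_u dR adj u * (dR adj u ^+ 2 / 2) = D3 / 2.
    by rewrite /D3 mulr_suml; apply: eq_bigr => u _; rewrite mulrA.
  field; done.
have D1pos : 0 < D1 by move: Hm; rewrite NE; lra.
have [u0 Hu0] : exists u0, (0 < deg adj u0)%N.
  case: (pickP (fun u => 0 < deg adj u)%N) => [u0 H|H]; first by exists u0.
  exfalso; move: D1pos; rewrite /D1 big1 ?ltxx // => u _.
  by move/negbT: (H u); rewrite -leqNgt leqn0 /dR => /eqP ->.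
have /card_gt0P [v0] := Hu0; rewrite inE => Huv.
have Hne : u0 != v0 by apply/eqP => E; move: Huv; rewrite E irr.
have Hu2 : uniq [:: u0; v0] by rewrite /= inE Hne.
have Hp2 : path adj u0 [:: v0] by rewrite /= Huv.
have [w /andP [Hw2 Hw0]] := @leaf_aux V adj SG AC #|V| u0 [:: v0] (leq_subr _ _) Hu2 Hp2 isT.
have Hpos : 0 < D3 - 4 * D1.
  have -> : D3 - 4 * D1 = \sum_u dR adj u * (dR adj u - 2) ^+ 2.
    have E : \sum_u dR adj u * (dR adj u - 2) ^+ 2 = D3 - 4 * D2 + 4 * D1.
      rewrite /D3 /D2 /D1 !mulr_sumr -sumrB -big_split /=; apply: eq_bigr => u _; ring.
    rewrite E HD2; ring.
  rewrite (bigD1 w) //=.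
  have R : 0 <= \sum_(i | i != w) dR adj i * (dR adj i - 2) ^+ 2.
    by apply: sumr_ge0 => i _; apply: mulr_ge0; [apply: ler0n | apply: sqr_ge0].
  have T : 0 < dR adj w * (dR adj w - 2) ^+ 2.
    case: (ltnP (deg adj w) 2) => Hl.
      have -> : dR adj w = 1 by rewrite /dR; have -> : deg adj w = 1%N by lia.
      lra.
    have : 3 <= dR adj w by rewrite /dR (ler_nat _ 3); lia.
    move=> H3; apply: mulr_gt0; [lra | apply: exprn_gt0; lra].
  lra.
have Mpos : 0 < D1 / 2 + Q by lra.
have Hmean : assort_mean a = 2.
  rewrite /assort_mean NEa MS HD2; field; do ?split; by apply: lt0r_neq0; lra.
have num0 : assort_num a = 0.
  rewrite /assort_num Hmean NEa PS HD2; field; do ?split; by apply: lt0r_neq0; lra.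
have den : assort_den a = (D3 - 4 * D1) / (2 * (D1 / 2 + Q)).
  rewrite /assort_den Hmean NEa SS; field; do ?split; by apply: lt0r_neq0; lra.
split; first by rewrite NEa.
split; last by rewrite /assortativity num0 mul0r.
rewrite den lt0r_neq0 // divr_gt0 // mulr_gt0 //.
Qed.
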